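(* Under the setting of the context, let $f:E\times\mathbb R^d\to\mathbb R$ be bounded and Lipschitz continuous with respect to the second variable, uniformly in the first. Then for all $T\ge0$, $$\sup_{0\le t\le T}\ m^{-2}\Bigl|\sum_{k=0}^{\lfloor m^2t\rfloor-1}f(\xi_k,S_k/m)-\sum_{k=0}^{\lfloor m^2t\rfloor-1}\bar f(S_k/m)\Bigr|\longrightarrow0$$ in probability as $m\to+\infty$, where $\bar f(y)=\sum_{i\in E}f(i,y)\mu(i)$.
   Context: Let $d\ge1$, $(e_1,\dots,e_d)$ the canonical basis, $\mathcal V=\{\pm e_1,\dots,\pm e_d\}$. Let $E$ be a finite set and $P$ an irreducible and aperiodic stochastic matrix on $E$ with unique invariant probability $\mu$. For $k\in E$, $y\in\mathbb R^d$, $p(k,y,\cdot)$ is a probability on $\mathcal V$, with $y\mapsto p(k,y,u)$ twice continuously differentiable with bounded derivatives; $g(k,y)=\sum_uu\,p(k,y,u)$ satisfies $\sum_k\mu(k)g(k,y)=0$ for all $y$. For an integer $m\ge1$, $(\xi_n,S_n)_{n\ge0}$ is a Markov chain on $E\times\mathbb Z^d$ (depending on $m$) with $S_0=0$ and $\mathbb P(\xi_{n+1}=k,S_{n+1}=S_n+u\mid\xi_0,\dots,\xi_n,S_0,\dots,S_n)=P(\xi_n,k)p(\xi_n,S_n/m,u)$ for $k\in E$, $u\in\mathcal V$. *)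

(* Defs.v *)
From HB Require Import structures.
From mathcomp Require Import all_boot all_order all_algebra.
From mathcomp Require Import all_classical all_reals all_analysis.
Set Implicit Arguments. Unset Strict Implicit. Unset Printing Implicit Defensive.
Import Order.TTheory GRing.Theory Num.Theory.
Import numFieldNormedType.Exports.
Local Open Scope ring_scope.

Section Defs.
Variable R : realType.

Variable E : finType.

Fixpoint Pn (P : E -> E -> R) (n : nat) (i j : E) : R :=
  match n with
  | 0%N => if i == j then 1 else 0
  | n'.+1 => \sum_(k : E) Pn P n' i k * P k j
  end.

Definition stochastic (P : E -> E -> R) : Prop :=
  (forall i j, 0 <= P i j) /\ (forall i, \sum_(j : E) P i j = 1).

Definition irreducible (P : E -> E -> R) : Prop :=
  forall i j, exists n : nat, 0 < Pn P n i j.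

Definition aperiodic (P : E -> E -> R) : Prop :=
  forall i (q : nat), (forall n : nat, (0 < n)%N -> 0 < Pn P n i i -> (q %| n)%N) -> q = 1%N.

Definition probability_on (nu : E -> R) : Prop :=
  (forall i, 0 <= nu i) /\ \sum_(i : E) nu i = 1.

Definition invariant_law (P : E -> E -> R) (mu : E -> R) : Prop :=
  forall j, \sum_(i : E) mu i * P i j = mu j.

Variable d : nat.

Definition evec (i : 'I_d) : 'rV[R]_d := delta_mx 0 i.

(* a direction is encoded as (i, b) : 'I_d * bool, meaning +e_i if b, -e_i otherwise *)
Definition dir := ('I_d * bool)%type.
Definition dvec (u : dir) : 'rV[R]_d := (if u.2 then 1 else -1) *: evec u.1.

Definition C2_bounded (F : 'rV[R]_d -> R) : Prop :=
  (forall i y, derivable F y (evec i)) /\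
  (forall i j y, derivable ('D_(evec i) F) y (evec j)) /\
  (forall i, continuous ('D_(evec i) F)) /\
  (forall i j, continuous ('D_(evec j) ('D_(evec i) F))) /\
  (exists M : R, forall i j y,
      `|'D_(evec i) F y| <= M /\ `|'D_(evec j) ('D_(evec i) F) y| <= M).

(* A trajectory of length N: states xi_0..xi_N and increments u_1..u_N (u n = S_{n+1}-S_n). *)
Definition traj (N : nat) := ({ffun 'I_N.+1 -> E} * {ffun 'I_N -> dir})%type.

Definition pxi N (w : traj N) (k : nat) : E := w.1 (inord k).

Definition pS N (w : traj N) (k : nat) : 'rV[R]_d :=
  \sum_(i < N | (i < k)%N) dvec (w.2 i).

Definition path_prob (P : E -> E -> R) (p : E -> 'rV[R]_d -> dir -> R)
  (nu : E -> R) (m N : nat) (w : traj N) : R :=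
  nu (pxi w 0) *
  \prod_(n < N) (P (pxi w n) (pxi w n.+1) *
                 p (pxi w n) ((m%:R)^-1 *: pS w n) (w.2 n)).

Definition prob_event (P : E -> E -> R) (p : E -> 'rV[R]_d -> dir -> R)
  (nu : E -> R) (m N : nat) (A : traj N -> Prop) : R :=
  \sum_(w : traj N | `[< A w >]) path_prob P p nu m w.

End Defs.

(* Main.v *)
Require Import Defs.
From HB Require Import structures.
From mathcomp Require Import all_boot all_order all_algebra.
From mathcomp Require Import all_classical all_reals all_analysis.
From mathcomp Require Import ring lra.
Import Order.TTheory GRing.Theory Num.Theory.
Import numFieldNormedType.Exports.
Local Open Scope ring_scope.
Set Implicit Arguments. Unset Strict Implicit. Unset Printing Implicit Defensive.

Lemma sum_pos_ex (R : realType) (I : finType) (F : I -> R) :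
  0 < \sum_i F i -> exists i, 0 < F i.
Proof.
move=> H; apply/not_existsP => /= Hn.
have : \sum_i F i <= 0.
  by apply: sumr_le0 => i _; rewrite leNgt; apply/negP => /(fun x => Hn i x).
by rewrite leNgt H.
Qed.

Lemma Pn_ge0 (R : realType) (E : finType) (P : E -> E -> R) :
  stochastic P -> forall n i j, 0 <= Pn P n i j.
Proof.
move=> [P0 _]; elim=> [|n IH] i j /=; first by case: (i == j).
by apply: sumr_ge0 => k _; apply: mulr_ge0.
Qed.

Lemma harmonic_const (R : realType) (E : finType) (P : E -> E -> R) (v : E -> R) :
  stochastic P -> irreducible P -> (forall i, v i = \sum_j P i j * v j) ->
  forall i j, v i = v j.
Proof.
move=> sP irr hv i j.
set i0 := [arg max_(k > i) v k]%O.
have [k0 _ Hmax] : exists2 k0, k0 = i0 & forall k, v k <= v i0.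
  exists i0 => //; rewrite /i0; case: arg_maxP => //= a _ Ha k; exact: Ha.
have [P0 P1] := sP.
have step : forall a b, v a = v i0 -> 0 < P a b -> v b = v i0.
  move=> a b Ha Pab.
  have Hs : \sum_c P a c * (v i0 - v c) = 0.
    under eq_bigr => c _ do rewrite mulrBr.
    by rewrite sumrB -mulr_suml P1 mul1r -hv Ha subrr.
  have Hnn : forall c, true -> 0 <= P a c * (v i0 - v c).
    by move=> c _; rewrite mulr_ge0 ?subr_ge0.
  have := psumr_eq0P Hnn Hs isT (i:=b).
  move/eqP; rewrite mulf_eq0 => /orP[|]; first by rewrite (gt_eqF Pab).
  by rewrite subr_eq0 => /eqP ->.
have claim : forall n b, 0 < Pn P n i0 b -> v b = v i0.
  elim=> [|n IH] b /=.
    by case: eqP => [->|]; rewrite ?ltxx.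
  move/sum_pos_ex => [k Hk].
  have H1 := Pn_ge0 sP n i0 k; have H2 := P0 k b.
  have Hk1 : 0 < Pn P n i0 k.
    by rewrite lt_def H1 andbT; apply/eqP => E0; move: Hk; rewrite E0 mul0r ltxx.
  have Hk2 : 0 < P k b.
    by rewrite lt_def H2 andbT; apply/eqP => E0; move: Hk; rewrite E0 mulr0 ltxx.
  exact: step (IH k Hk1) Hk2.
have [n1 Hn1] := irr i0 i; have [n2 Hn2] := irr i0 j.
by rewrite (claim _ _ Hn1) (claim _ _ Hn2).
Qed.

Lemma sum_enum_val (R : realType) (E : finType) (F : E -> R) :
  \sum_(a < #|E|) F (enum_val a) = \sum_i F i.
Proof.
rewrite [RHS](reindex (fun a : 'I_#|E| => enum_val a)) //; apply: onW_bij; exact: enum_val_bij.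
Qed.

Lemma poisson (R : realType) (E : finType) (P : E -> E -> R) (mu : E -> R) :
  stochastic P -> irreducible P -> probability_on mu -> invariant_law P mu ->
  exists Q : E -> E -> R, forall g : E -> R, \sum_i mu i * g i = 0 ->
   forall i, \sum_j g j * Q j i - \sum_k P i k * (\sum_j g j * Q j k) = g i.
Proof.
move=> sP irr [mu0 mu1] inv.
pose n := #|E|.
pose Pm : 'M[R]_n := \matrix_(a, b) P (enum_val a) (enum_val b).
pose At : 'M[R]_n := 1%:M - Pm^T.
pose mucol : 'cV[R]_n := \col_a mu (enum_val a).
have AtE : forall x : 'rV[R]_n, forall a, (x *m At) 0 a =
    x 0 a - \sum_b P (enum_val a) (enum_val b) * x 0 b.
  move=> x a; rewrite /At mulmxBr mulmx1 !mxE; congr (_ - _).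
  by apply: eq_bigr => b _; rewrite !mxE mulrC.
have Hc : (At <= kermx mucol)%MS.
  apply/sub_kermxP; rewrite /At mulmxBl mul1mx; apply/eqP; rewrite subr_eq0; apply/eqP.
  apply/matrixP => b z; rewrite !mxE (ord1 z).
  rewrite -(inv (enum_val b)) -sum_enum_val; apply: eq_bigr => a _; rewrite !mxE mulrC //.
have Hr1 : (\rank (kermx mucol) <= n.-1)%N.
  rewrite mxrank_ker.
  suff : (0 < \rank mucol)%N by move=> ?; rewrite -subn1; apply: leq_sub2l.
  rewrite lt0n mxrank_eq0; apply/eqP => H0.
  have : \sum_i mu i = 0.
    rewrite -sum_enum_val; apply: big1 => a _.
    by have := congr1 (fun M : 'cV[R]_n => M a 0) H0; rewrite !mxE.
  by rewrite mu1 => /eqP; rewrite oner_eq0.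
have Hd : (kermx At <= (const_mx 1 : 'rV[R]_n))%MS.
  apply/row_subP => i.
  set v := row i (kermx At).
  have hv : v *m At = 0 by rewrite /v -row_mul mulmx_ker row0.
  clearbody v.
  pose vE := fun e : E => v 0 (enum_rank e).
  have harm : forall e, vE e = \sum_j P e j * vE j.
    move=> e; have := congr1 (fun M : 'rV[R]_n => M 0 (enum_rank e)) hv.
    rewrite AtE enum_rankK => H.
    have H0 : (0 : 'rV[R]_n) 0 (enum_rank e) = 0 by rewrite mxE.
    rewrite H0 in H; move/eqP: H; rewrite subr_eq0 => /eqP.
    rewrite /vE => ->.
    rewrite -(sum_enum_val (fun j => P e j * v 0 (enum_rank j))).
    apply: eq_bigr => b _; by rewrite enum_valK.
  have Hv : v = v 0 i *: const_mx 1.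
    apply/matrixP => z b; rewrite !mxE (ord1 z) mulr1.
    have := harmonic_const sP irr harm (enum_val b) (enum_val i).
    by rewrite /vE !enum_valK.
  by rewrite Hv scalemx_sub.
have Hr2 : (n.-1 <= \rank At)%N.
  have := mxrankS Hd; rewrite mxrank_ker => H.
  have H1 := leq_trans H (rank_leq_row _).
  by rewrite -subn1 leq_subLR addnC -leq_subLR.
have HKA : (kermx mucol <= At)%MS.
  rewrite -(mxrank_leqif_sup Hc).2.
  by rewrite eqn_leq mxrankS // (leq_trans Hr1 Hr2).
exists (fun j i => pinvmx At (enum_rank j) (enum_rank i)) => g hg i.
pose gv : 'rV[R]_n := \row_a g (enum_val a).
have Hg : (gv <= At)%MS.
  apply: submx_trans HKA; apply/sub_kermxP; apply/matrixP => z z'.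
  rewrite !mxE (ord1 z) (ord1 z'); apply: eq_trans hg.
  rewrite -(sum_enum_val (fun i => mu i * g i)).
  by apply: eq_bigr => a _; rewrite !mxE mulrC.
have Hi := congr1 (fun M : 'rV[R]_n => M 0 (enum_rank i)) (mulmxKpV Hg).
rewrite /= AtE enum_rankK in Hi.
have Hgi : gv 0 (enum_rank i) = g i by rewrite mxE enum_rankK.
rewrite -Hgi -Hi.
have hE : forall a, (gv *m pinvmx At) 0 a = \sum_j g j * pinvmx At (enum_rank j) a.
  move=> a; rewrite mxE -(sum_enum_val (fun j => g j * pinvmx At (enum_rank j) a)); apply: eq_bigr => b _; by rewrite mxE enum_valK.
rewrite hE; congr (_ - _); rewrite -(sum_enum_val (fun k => P i k * \sum_j g j * pinvmx At (enum_rank j) (enum_rank k))); apply: eq_bigr => b _.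
by rewrite hE enum_valK.
Qed.

Section Traj.
Variables (R : realType) (E : finType) (d : nat).

Definition ext N (v : traj E d N) (j : E) (u : dir d) : traj E d N.+1 :=
  ([ffun i : 'I_N.+2 => if unlift ord_max i is Some i' then v.1 i' else j],
   [ffun i : 'I_N.+1 => if unlift ord_max i is Some i' then v.2 i' else u]).

Definition restr N (w : traj E d N.+1) : traj E d N * (E * dir d) :=
  (([ffun i => w.1 (lift ord_max i)], [ffun i => w.2 (lift ord_max i)]),
   (w.1 ord_max, w.2 ord_max)).

Lemma ext_bij N : bijective (fun x : traj E d N * (E * dir d) => ext x.1 x.2.1 x.2.2).
Proof.
exists (@restr N).
- case=> [[v1 v2] [j u]]; rewrite /restr /ext /= !ffunE !unlift_none.
  by congr (_, _); congr (_, _); apply/ffunP => i; rewrite !ffunE liftK.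
- case=> w1 w2; rewrite /restr /ext /=; congr (_, _); apply/ffunP => i;
  rewrite !ffunE; case: unliftP => [i' ->|->]; by rewrite ?ffunE.
Qed.

Lemma sum_traj_S N (F : traj E d N.+1 -> R) :
  \sum_w F w = \sum_v \sum_j \sum_u F (ext v j u).
Proof.
rewrite (reindex _ (onW_bij _ (@ext_bij N))) /=.
under [RHS]eq_bigr do rewrite pair_bigA.
by rewrite pair_bigA.
Qed.

Lemma pxi_ext_lt N (v : traj E d N) j u k : (k <= N)%N -> pxi (ext v j u) k = pxi v k.
Proof.
move=> hk; have hk1 : (k < N.+1)%N by [].
have hk2 : (k < N.+2)%N by apply: ltnW.
rewrite /pxi /ext ffunE; case: unliftP => [i' Hi|Hi].
  congr (v.1 _); apply/val_inj => /=.
  have := congr1 (@nat_of_ord _) Hi; rewrite lift_max (inordK hk2) => ->.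
  by rewrite inordK.
have := congr1 (@nat_of_ord _) Hi; rewrite /= (inordK hk2) => hk'.
by move: hk; rewrite hk' ltnn.
Qed.

Lemma pxi_ext_last N (v : traj E d N) j u : pxi (ext v j u) N.+1 = j.
Proof.
rewrite /pxi /ext ffunE; case: unliftP => [i' Hi|//].
have := congr1 (@nat_of_ord _) Hi; rewrite lift_max inordK // => H.
by have := ltn_ord i'; rewrite -H ltnn.
Qed.

Lemma ext2_widen N (v : traj E d N) j u (i : 'I_N) :
  (ext v j u).2 (widen_ord (leqnSn N) i) = v.2 i.
Proof.
have -> : widen_ord (leqnSn N) i = lift ord_max i by apply/val_inj; exact: (esym (lift_max i)).
by rewrite /ext ffunE liftK.
Qed.

Lemma ext2_last N (v : traj E d N) j u : (ext v j u).2 ord_max = u.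
Proof. by rewrite /ext ffunE unlift_none. Qed.

Lemma pS_ext N (v : traj E d N) j u k : (k <= N)%N -> pS R (ext v j u) k = pS R v k.
Proof.
move=> hk; rewrite /pS big_mkcond big_ord_recr /= ltnNge hk addr0.
rewrite [RHS]big_mkcond; apply: eq_bigr => i _ /=; by rewrite ext2_widen.
Qed.

Variables (P : E -> E -> R) (p : E -> 'rV[R]_d -> dir d -> R) (nu : E -> R) (m : nat).

Definition yy N (w : traj E d N) k := (m%:R)^-1 *: pS R w k.

Lemma pp_ext N (v : traj E d N) j u :
  path_prob P p nu m (ext v j u) =
  path_prob P p nu m v * (P (pxi v N) j * p (pxi v N) (yy v N) u).
Proof.
have Hp : \prod_(i < N) (P (pxi (ext v j u) (widen_ord (leqnSn N) i)) (pxi (ext v j u) (widen_ord (leqnSn N) i).+1) *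
        p (pxi (ext v j u) (widen_ord (leqnSn N) i)) ((m%:R)^-1 *: pS R (ext v j u) (widen_ord (leqnSn N) i)) ((ext v j u).2 (widen_ord (leqnSn N) i)))
   = \prod_(i < N) (P (pxi v i) (pxi v i.+1) * p (pxi v i) ((m%:R)^-1 *: pS R v i) (v.2 i)).
  apply: eq_bigr => i _.
  rewrite ext2_widen (@pxi_ext_lt N v j u (widen_ord (leqnSn N) i) (ltnW (ltn_ord i))).
  rewrite (@pxi_ext_lt N v j u (widen_ord (leqnSn N) i).+1 (ltn_ord i)).
  by rewrite (@pS_ext N v j u (widen_ord (leqnSn N) i) (ltnW (ltn_ord i))).
have Hl : P (pxi (ext v j u) (@ord_max N)) (pxi (ext v j u) (@ord_max N).+1) *
        p (pxi (ext v j u) (@ord_max N)) ((m%:R)^-1 *: pS R (ext v j u) (@ord_max N)) ((ext v j u).2 (@ord_max N))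
   = P (pxi v N) j * p (pxi v N) (yy v N) u.
  by rewrite (@pxi_ext_lt N v j u N (leqnn N)) pxi_ext_last (@pS_ext N v j u N (leqnn N)) ext2_last.
rewrite /path_prob big_ord_recr /= Hp Hl (@pxi_ext_lt N v j u 0 (leq0n N)).
by rewrite mulrA.
Qed.

Definition Ex N (F : traj E d N -> R) := \sum_w path_prob P p nu m w * F w.

Lemma Ex_S N F : Ex (N := N.+1) F =
  Ex (fun v => \sum_j \sum_u P (pxi v N) j * p (pxi v N) (yy v N) u * F (ext v j u)).
Proof.
rewrite /Ex sum_traj_S; apply: eq_bigr => v _; rewrite mulr_sumr; apply: eq_bigr => j _.
rewrite mulr_sumr; apply: eq_bigr => u _; by rewrite pp_ext !mulrA.
Qed.

End Traj.

Section Mart.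
Variables (R : realType) (E : finType) (d : nat).
Variables (P : E -> E -> R) (p : E -> 'rV[R]_d -> dir d -> R) (nu : E -> R) (m : nat).
Variables (h : E -> 'rV[R]_d -> R) (H : R).
Hypothesis sP : stochastic P.
Hypothesis pp0 : forall k y u, 0 <= p k y u.
Hypothesis pp1 : forall k y, \sum_u p k y u = 1.
Hypothesis nu0 : forall i, 0 <= nu i.
Hypothesis hH : forall i y, `|h i y| <= H.

Definition Dk N (w : traj E d N) k :=
  h (pxi w k.+1) (yy R m w k) - \sum_j P (pxi w k) j * h j (yy R m w k).
Definition Mn N (w : traj E d N) n := \sum_(0 <= k < n) Dk w k.

Notation EX := (Ex P p nu m).

Lemma yy_ext N (v : traj E d N) j u k : (k <= N)%N -> yy R m (ext v j u) k = yy R m v k.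
Proof. by move=> hk; rewrite /yy pS_ext. Qed.

Lemma Dk_ext N (v : traj E d N) j u k : (k < N)%N -> Dk (ext v j u) k = Dk v k.
Proof.
move=> hk; rewrite /Dk !yy_ext ?(ltnW hk) // !pxi_ext_lt ?(ltnW hk) //.
Qed.

Lemma Mn_ext N (v : traj E d N) j u n : (n <= N)%N -> Mn (ext v j u) n = Mn v n.
Proof.
move=> hn; rewrite /Mn; apply: eq_big_nat => k /andP[_ hk]; apply: Dk_ext.
exact: leq_trans hk hn.
Qed.

Lemma Mn_ext_last N (v : traj E d N) j u : Mn (ext v j u) N.+1 =
  Mn v N + (h j (yy R m v N) - \sum_i P (pxi v N) i * h i (yy R m v N)).
Proof.
rewrite /Mn big_nat_recr //=; congr (_ + _).
  by apply: eq_big_nat => k /andP[_ hk]; apply: Dk_ext.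
by rewrite /Dk pxi_ext_last pxi_ext_lt // yy_ext.
Qed.

Lemma path_prob_ge0 N (w : traj E d N) : 0 <= path_prob P p nu m w.
Proof.
have [P0 _] := sP.
by rewrite /path_prob mulr_ge0 // prodr_ge0 // => i _; rewrite mulr_ge0.
Qed.

Lemma Ex_le N (F G : traj E d N -> R) : (forall w, F w <= G w) -> EX F <= EX G.
Proof.
move=> hFG; rewrite /Ex; apply: ler_sum => w _; apply: ler_wpM2l => //.
exact: path_prob_ge0.
Qed.

Lemma Ex_add N (F G : traj E d N -> R) : EX (fun w => F w + G w) = EX F + EX G.
Proof. by rewrite /Ex -big_split; apply: eq_bigr => w _; rewrite mulrDr. Qed.

Lemma Ex_cstl N (F : traj E d N -> R) c : EX (fun w => c * F w) = c * EX F.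
Proof. by rewrite /Ex mulr_sumr; apply: eq_bigr => w _; rewrite mulrCA. Qed.

Lemma sumPp N (v : traj E d N) (F : E -> R) :
  \sum_j \sum_u P (pxi v N) j * p (pxi v N) (yy R m v N) u * F j =
  \sum_j P (pxi v N) j * F j.
Proof.
apply: eq_bigr => j _.
under eq_bigr do rewrite mulrAC.
by rewrite -mulr_sumr pp1 mulr1.
Qed.

Lemma Ex_ext N (F : traj E d N -> R) (G : traj E d N.+1 -> R) :
  (forall v j u, G (ext v j u) = F v) -> EX G = EX F.
Proof.
move=> hG; rewrite Ex_S; apply: eq_bigr => v _; congr (_ * _).
under eq_bigr do under eq_bigr do rewrite hG.
have [_ P1] := sP.
by rewrite (sumPp v (fun=> F v)) -mulr_suml P1 mul1r.
Qed.

Definition c0 := \sum_(w : traj E d 0) nu (pxi w 0).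

Lemma Ex1 N : EX (fun _ : traj E d N => 1) = c0.
Proof.
elim: N => [|N IH].
  by rewrite /Ex /c0; apply: eq_bigr => w _; rewrite /path_prob big_ord0 !mulr1.
by rewrite (@Ex_ext N (fun=> 1)).
Qed.

Lemma Ex_cst N c : EX (fun _ : traj E d N => c) = c * c0.
Proof. by rewrite -(Ex1 N) -Ex_cstl; apply: eq_bigr => w _; rewrite mulr1. Qed.

Lemma c0_ge0 : 0 <= c0.
Proof. by rewrite /c0 sumr_ge0. Qed.

Hypothesis H0 : 0 <= H.

Lemma c_bound (i : E) y : `|\sum_j P i j * h j y| <= H.
Proof.
have [P0 P1] := sP.
apply: le_trans (ler_norm_sum _ _ _) _.
apply: (@le_trans _ _ (\sum_j P i j * H)); last by rewrite -mulr_suml P1 mul1r.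
apply: ler_sum => j _; rewrite normrM ger0_norm //; exact: ler_wpM2l.
Qed.

Lemma D2_bound (i : E) y j : (h j y - \sum_k P i k * h k y) ^+ 2 <= 4 * H ^+ 2.
Proof.
set D := _ - _.
have hD : `|D| <= H + H by apply: le_trans (ler_normB _ _) _; apply: lerD; [exact: hH | exact: c_bound].
rewrite -(real_normK (num_real D)) expr2.
have -> : 4 * H ^+ 2 = (H + H) * (H + H) by rewrite expr2; ring.
by apply: ler_pM.
Qed.

Lemma inner_bound N (v : traj E d N) :
  \sum_j \sum_u P (pxi v N) j * p (pxi v N) (yy R m v N) u * (Mn (ext v j u) N.+1) ^+ 2
  <= (Mn v N) ^+ 2 + 4 * H ^+ 2.
Proof.
have [P0 P1] := sP.
under eq_bigr do under eq_bigr do rewrite Mn_ext_last.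
rewrite (sumPp v (fun j => (Mn v N + (h j (yy R m v N) - \sum_i P (pxi v N) i * h i (yy R m v N))) ^+ 2)).
set y := yy R m v N; set M := Mn v N; set c := \sum_i P (pxi v N) i * h i y.
have -> : \sum_j P (pxi v N) j * (M + (h j y - c)) ^+ 2 =
   \sum_j P (pxi v N) j * M ^+ 2 + (\sum_j 2 * M * (P (pxi v N) j * (h j y - c))
   + \sum_j P (pxi v N) j * (h j y - c) ^+ 2).
  rewrite -big_split -big_split; apply: eq_bigr => j _ /=; ring.
have -> : \sum_j 2 * M * (P (pxi v N) j * (h j y - c)) = 0.
  rewrite -mulr_sumr.
  have -> : \sum_j P (pxi v N) j * (h j y - c) = 0.
    under eq_bigr do rewrite mulrBr.
    by rewrite sumrB -mulr_suml P1 mul1r subrr.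
  by rewrite mulr0.
rewrite add0r -mulr_suml P1 mul1r lerD2l.
apply: (@le_trans _ _ (\sum_j P (pxi v N) j * (4 * H ^+ 2))); last by rewrite -mulr_suml P1 mul1r.
apply: ler_sum => j _; apply: ler_wpM2l => //; exact: D2_bound.
Qed.

Lemma Mn2_bound N n : (n <= N)%N ->
  EX (fun w : traj E d N => (Mn w n) ^+ 2) <= 4 * H ^+ 2 * n%:R * c0.
Proof.
elim: N n => [|N IH] n hn.
  move: hn; rewrite leqn0 => /eqP ->.
  rewrite /Ex big1 ?mulr0 ?mul0r // => w _.
  by rewrite /Mn big_geq // expr0n mulr0.
case: (leqP n N) => hnN.
  by rewrite (@Ex_ext N (fun w => Mn w n ^+ 2)) ?IH // => v j u; rewrite Mn_ext.
have -> : n = N.+1 by apply/eqP; rewrite eqn_leq hn hnN.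
rewrite Ex_S.
apply: le_trans (Ex_le (G := fun v => Mn v N ^+ 2 + 4 * H ^+ 2) _) _.
  by move=> v; apply: inner_bound.
rewrite Ex_add Ex_cst.
have H1 := IH N (leqnn N).
rewrite -(natr1 N) mulrDr mulrDl mulr1.
by apply: lerD.
Qed.

End Mart.

Local Open Scope classical_set_scope.

Lemma sum_term_le (R : realType) (I : finType) (F : I -> R) i :
  (forall j, 0 <= F j) -> F i <= \sum_j F j.
Proof.
move=> F0; rewrite (bigD1 i) //= lerDl; exact: sumr_ge0.
Qed.

Lemma pS_step (R : realType) (E : finType) (d : nat) N (w : traj E d N) k :
  `|pS R w k.+1 - pS R w k| <= \sum_(u : dir d) `|dvec R u|.
Proof.
have HS : pS R w k.+1 - pS R w k =
    \sum_(i < N) (if (i : nat) == k then dvec R (w.2 i) else 0).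
  rewrite /pS (big_mkcond (fun i : 'I_N => (i < k.+1)%N)) (big_mkcond (fun i : 'I_N => (i < k)%N)).
  rewrite -sumrB; apply: eq_bigr => i _.
  rewrite ltnS leq_eqVlt; case: eqP => [->|_] /=; first by rewrite ltnn subr0.
  by case: (_ < _)%N; rewrite subrr.
rewrite HS.
case: (ltnP k N) => hk.
  rewrite (bigD1 (Ordinal hk)) //= eqxx big1 ?addr0.
    by apply: sum_term_le => u.
  move=> i hi; case: eqP => // hik; case/negP: hi; apply/eqP; exact: val_inj.
rewrite big1; first by rewrite normr0 sumr_ge0.
move=> i _; case: eqP => // hik; have := ltn_ord i; rewrite hik ltnNge hk.
done.
Qed.

Lemma inv_bound (R : realType) (K x : R) : 1 <= x -> 0 <= K / x -> K / x <= 2 * K / (x + 1).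
Proof.
move=> x1 hK.
have x0 : 0 < x by apply: lt_le_trans x1.
have K0 : 0 <= K by move: hK; rewrite pmulr_lge0 // invr_gt0.
have x10 : 0 < x + 1 by apply: ltr_wpDr.
rewrite -subr_ge0.
have -> : 2 * K / (x + 1) - K / x = K * (x - 1) / (x * (x + 1)).
  by field; rewrite ?gt_eqF.
apply: divr_ge0; first by apply: mulr_ge0 => //; rewrite subr_ge0.
by apply: mulr_ge0; apply: ltW.
Qed.

Lemma cvg0_bound (R : realType) (u : nat -> R) (K : R) (m0 : nat) :
  (forall m, 0 <= u m) -> (forall m, (m0 <= m)%N -> (1 <= m)%N -> u m <= K / m%:R) ->
  u @ \oo --> 0.
Proof.
move=> u0 uK.
apply: (@squeeze_cvgr _ _ _ _ (fun=> 0) (fun m => (2 * K) * harmonic m)).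
- near=> m.
  have hm : (m0 < m)%N by near: m; exists m0.+1 => // k /=.
  rewrite u0 /=.
  have h1 := uK m (ltnW hm) (leq_trans (ltn0Sn _) hm).
  apply: le_trans (h1) _; rewrite /harmonic /= -(natr1 m); apply: inv_bound.
    by rewrite ler1n (leq_trans (ltn0Sn _) hm).
  exact: le_trans (u0 m) h1.
- exact: cvg_cst.
- have := @cvgZr _ R^o _ _ _ (2 * K) _ _ (@cvg_harmonic R).
  by rewrite scaler0; apply; apply: filter_nbhs_proper || exact: _.
Unshelve. all: end_near.
Qed.

Section Main.
Variables (R : realType) (E : finType) (d : nat).
Variables (P : E -> E -> R) (p : E -> 'rV[R]_d -> dir d -> R) (nu : E -> R).
Variables (f : E -> 'rV[R]_d -> R) (fb : 'rV[R]_d -> R) (h : E -> 'rV[R]_d -> R).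
Variables (Hh Lh T eps : R).
Hypothesis sP : stochastic P.
Hypothesis pp0 : forall k y u, 0 <= p k y u.
Hypothesis pp1 : forall k y, \sum_u p k y u = 1.
Hypothesis nu0 : forall i, 0 <= nu i.
Hypothesis hH : forall i y, `|h i y| <= Hh.
Hypothesis hL : forall i y z, `|h i y - h i z| <= Lh * `|y - z|.
Hypothesis Hh0 : 0 <= Hh.
Hypothesis Lh0 : 0 <= Lh.
Hypothesis T0 : 0 <= T.
Hypothesis eps0 : 0 < eps.
Hypothesis hfg : forall i y, f i y - fb y = h i y - \sum_k P i k * h k y.

Definition C0 := \sum_(u : dir d) `|dvec R u|.
Definition K1 := 4 * Hh + T * Lh * C0.
Definition K2 := 16 * Hh ^+ 2 * c0 d nu * T * (T + 1) / eps ^+ 2.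

Lemma C0_ge0 : 0 <= C0.
Proof. by apply: sumr_ge0. Qed.

Definition RR m N (w : traj E d N) n :=
  (h (pxi w 0) (yy R m w 0) - h (pxi w n) (yy R m w n)) +
  \sum_(0 <= k < n) (h (pxi w k.+1) (yy R m w k.+1) - h (pxi w k.+1) (yy R m w k)).

Lemma G_decomp m N (w : traj E d N) n :
  \sum_(0 <= k < n) (f (pxi w k) (yy R m w k) - fb (yy R m w k)) =
  Mn P m h w n + RR m w n.
Proof.
rewrite /RR.
set F := fun k => h (pxi w k) (yy R m w k).
have tel : F 0%N - F n = \sum_(0 <= k < n) (F k - F k.+1).
  rewrite -opprB -(telescope_sumr _ (leq0n n)) -sumrN.
  by apply: eq_bigr => k _; rewrite opprB.
rewrite tel /Mn -!big_split; apply: eq_bigr => k _ /=.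
by rewrite hfg /Dk /F; ring.
Qed.

Lemma R_bound m N (w : traj E d N) n :
  `|RR m w n| <= 2 * Hh + n%:R * (Lh * (C0 / m%:R)).
Proof.
rewrite /RR.
apply: le_trans (ler_normD _ _) _; apply: lerD.
  have -> : 2 * Hh = Hh + Hh by ring.
  by apply: le_trans (ler_normB _ _) _; rewrite lerD.
apply: le_trans (ler_norm_sum _ _ _) _.
apply: (@le_trans _ _ (\sum_(0 <= k < n) (Lh * (C0 / m%:R)))); last first.
  by rewrite sumr_const_nat subn0 mulr_natl.
apply: ler_sum => k _; apply: le_trans (hL _ _ _) _; apply: ler_wpM2l => //.
rewrite /yy -scalerBr normrZ ger0_norm ?invr_ge0 // mulrC.
by apply: ler_wpM2r; [rewrite invr_ge0 | exact: pS_step].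
Qed.

Lemma Dk_bound m N (w : traj E d N) k : `|Dk P m h w k| <= 2 * Hh.
Proof.
have -> : 2 * Hh = Hh + Hh by ring.
by apply: le_trans (ler_normB _ _) _; rewrite lerD // (c_bound sP hH).
Qed.

Lemma Mdiff m N (w : traj E d N) n1 n2 : (n1 <= n2)%N ->
  `|Mn P m h w n2 - Mn P m h w n1| <= (n2 - n1)%:R * (2 * Hh).
Proof.
move=> hn; rewrite /Mn (@big_cat_nat _ _ _ n1 0 n2 _ _ (leq0n n1) hn) /= addrC addrK.
apply: le_trans (ler_norm_sum _ _ _) _.
apply: (@le_trans _ _ (\sum_(n1 <= k < n2) (2 * Hh))); last by rewrite sumr_const_nat (mulr_natl (2 * Hh) (n2 - n1)).
by apply: ler_sum => k _; apply: Dk_bound.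
Qed.

Lemma point m N (w : traj E d N) n : (1 <= m)%N -> 2 * K1 / eps <= m%:R ->
  N%:R <= m%:R ^+ 2 * T -> (n <= N)%N ->
  eps * m%:R ^+ 2 < `|\sum_(0 <= k < n) (f (pxi w k) (yy R m w k) - fb (yy R m w k))| ->
  1 <= \sum_(j < (N %/ m).+1) (Mn P m h w (m * j)) ^+ 2 / (eps * m%:R ^+ 2 / 2) ^+ 2.
Proof.
move=> m1 mK hN hn hG.
rewrite G_decomp in hG.
have hRb := R_bound m w n.
move: hG hRb; set M := Mn P m h w n; set Rn := RR m w n => hG hRb.
set j := (n %/ m)%N.
have hj : (m * j <= n)%N by rewrite mulnC leq_trunc_div.
have hnj : (n - m * j < m)%N.
  by rewrite {1}(divn_eq n m) mulnC addKn ltn_pmod.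
have hMd := Mdiff m w hj.
set M' := Mn P m h w (m * j) in hMd *.
have mr1 : 1 <= m%:R :> R by rewrite ler1n.
have mr0 : 0 < m%:R :> R by apply: lt_le_trans mr1.
have hMd' : `|M - M'| <= m%:R * (2 * Hh).
  apply: le_trans hMd _; apply: ler_wpM2r; first by rewrite mulr_ge0.
  by rewrite ler_nat ltnW.
have hnR : n%:R <= m%:R ^+ 2 * T :> R by apply: le_trans hN; rewrite ler_nat.
have hX : n%:R * (Lh * (C0 / m%:R)) <= m%:R * T * Lh * C0.
  have C00 := C0_ge0.
  apply: le_trans (ler_wpM2r _ hnR) _.
    by rewrite mulr_ge0 // divr_ge0 // ltW.
  have -> : m%:R ^+ 2 * T * (Lh * (C0 / m%:R)) = m%:R * T * Lh * C0.
    by field; rewrite gt_eqF.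
  by [].
have hK : m%:R * K1 <= eps * m%:R ^+ 2 / 2.
  have h2 : 2 * K1 <= m%:R * eps by rewrite -ler_pdivrMr.
  have := ler_wpM2l (ltW mr0) h2.
  rewrite /K1 => h3; lra.
have hHm : Hh <= m%:R * Hh by rewrite ler_peMl.
have t1 : `|M + Rn| <= `|M| + `|Rn| by apply: ler_normD.
have t2 : `|M| <= `|M'| + `|M - M'|.
  by apply: le_trans (ler_normD _ _); rewrite addrC subrK.
have ha : eps * m%:R ^+ 2 / 2 < `|M'|.
  move: hK; rewrite /K1 => hK; lra.
set a0 := eps * m%:R ^+ 2 / 2 in ha *.
have a00 : 0 < a0 by rewrite /a0 divr_gt0 // mulr_gt0 // exprn_gt0.
have hjlt : (j < (N %/ m).+1)%N by rewrite ltnS leq_div2r.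
apply: le_trans (sum_term_le (Ordinal hjlt) _).
  rewrite /= ler_pdivlMr ?exprn_gt0 // mul1r -(real_normK (num_real M')) !expr2.
  by apply: ler_pM; rewrite ?ltW.
by move=> i; rewrite divr_ge0 ?sqr_ge0 ?exprn_ge0 ?ltW.
Qed.

Lemma prob_bound m N (A : traj E d N -> Prop) : (1 <= m)%N -> 2 * K1 / eps <= m%:R ->
  N%:R <= m%:R ^+ 2 * T ->
  (forall w, A w -> exists2 n, (n <= N)%N &
     eps * m%:R ^+ 2 < `|\sum_(0 <= k < n) (f (pxi w k) (yy R m w k) - fb (yy R m w k))|) ->
  prob_event P p nu m A <= K2 / m%:R.
Proof.
move=> m1 mK hN hA.
have mr1 : 1 <= m%:R :> R by rewrite ler1n.
have mr0 : 0 < m%:R :> R by apply: lt_le_trans mr1.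
set a0 := eps * m%:R ^+ 2 / 2.
have a00 : 0 < a0 by rewrite /a0 divr_gt0 // mulr_gt0 // exprn_gt0.
set S := fun w : traj E d N => \sum_(j < (N %/ m).+1) (Mn P m h w (m * j)) ^+ 2 / a0 ^+ 2.
have S0 : forall w, 0 <= S w.
  by move=> w; apply: sumr_ge0 => j _; rewrite divr_ge0 ?sqr_ge0 ?exprn_ge0 ?ltW.
have step1 : prob_event P p nu m A <= Ex P p nu m S.
  rewrite /prob_event /Ex big_mkcond /=; apply: ler_sum => w _.
  case: asboolP => [Aw|_]; last by rewrite mulr_ge0 ?(path_prob_ge0 m sP pp0 nu0).
  have [n hn hG] := hA w Aw.
  rewrite -[X in X <= _]mulr1; apply: ler_wpM2l; first exact: (path_prob_ge0 m sP pp0 nu0).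
  exact: point hG.
have step2 : Ex P p nu m S =
    \sum_(j < (N %/ m).+1) Ex P p nu m (fun w : traj E d N => Mn P m h w (m * j) ^+ 2) / a0 ^+ 2.
  rewrite /Ex /S; under eq_bigr do rewrite mulr_sumr.
  rewrite exchange_big; apply: eq_bigr => j _; rewrite mulr_suml; apply: eq_bigr => w _.
  by rewrite mulrA.
have c00 := c0_ge0 d nu0.
have step3 : \sum_(j < (N %/ m).+1) Ex P p nu m (fun w : traj E d N => Mn P m h w (m * j) ^+ 2) / a0 ^+ 2
    <= \sum_(j < (N %/ m).+1) (4 * Hh ^+ 2 * N%:R * c0 d nu / a0 ^+ 2).
  apply: ler_sum => j _; apply: ler_wpM2r; first by rewrite invr_ge0 exprn_ge0 ?ltW.
  have hj : (m * j <= N)%N.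
    have hjq : (j <= N %/ m)%N by rewrite -ltnS.
    apply: leq_trans (leq_mul (leqnn m) hjq) _.
    by rewrite mulnC leq_trunc_div.
  apply: le_trans (Mn2_bound m sP pp0 pp1 nu0 hH hj) _.
  apply: ler_wpM2r => //; apply: ler_wpM2l; first by rewrite mulr_ge0 ?exprn_ge0.
  by rewrite ler_nat.
rewrite sumr_const card_ord in step3.
apply: le_trans step1 _; rewrite step2; apply: le_trans step3 _.
set q := (N %/ m)%N.
have hq : q%:R <= m%:R * T :> R.
  have : (q * m <= N)%N by rewrite leq_trunc_div.
  rewrite -(ler_nat R) natrM => h1.
  have h2 := le_trans h1 hN.
  by rewrite -(ler_pM2r mr0); apply: le_trans h2 _; rewrite expr2 mulrAC lexx.
have X0 : 0 <= 4 * Hh ^+ 2 by rewrite mulr_ge0 ?exprn_ge0.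
apply: (@le_trans _ _ ((m%:R * T + 1) * (4 * Hh ^+ 2 * (m%:R ^+ 2 * T) * c0 d nu / a0 ^+ 2))).
  rewrite -(mulr_natl (4 * Hh ^+ 2 * N%:R * c0 d nu / a0 ^+ 2) q.+1); apply: ler_pM.
  - by rewrite ler0n.
  - by apply: divr_ge0; [rewrite !mulr_ge0 ?exprn_ge0 ?ler0n | rewrite exprn_ge0 ?ltW].
  - by rewrite -natr1 lerD2r.
  - apply: ler_wpM2r; first by rewrite invr_ge0 exprn_ge0 ?ltW.
    by apply: ler_wpM2r => //; apply: ler_wpM2l.
rewrite -subr_ge0.
have -> : K2 / m%:R - (m%:R * T + 1) * (4 * Hh ^+ 2 * (m%:R ^+ 2 * T) * c0 d nu / a0 ^+ 2)
   = 16 * Hh ^+ 2 * c0 d nu * T * (m%:R - 1) / (eps ^+ 2 * m%:R ^+ 2).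
  rewrite /K2 /a0; field.
  by rewrite !gt_eqF.
apply: divr_ge0; last by rewrite mulr_ge0 ?exprn_ge0 ?ltW.
by rewrite !mulr_ge0 ?exprn_ge0 // subr_ge0.
Qed.

End Main.

Unset Implicit Arguments. Set Strict Implicit.

Theorem proposition4p5 (R : realType) (d : nat) (E : finType)
  (P : E -> E -> R) (mu : E -> R)
  (p : E -> 'rV[R]_d -> dir d -> R)
  (nu : E -> R) (f : E -> 'rV[R]_d -> R) (T : R) :
  (0 < d)%N ->
  stochastic P -> irreducible P -> aperiodic P ->
  probability_on mu -> invariant_law P mu ->
  (forall k y, probability_on (p k y)) ->
  (forall k u, C2_bounded (fun y => p k y u)) ->
  (forall y, \sum_(k : E) mu k *: (\sum_(u : dir d) p k y u *: dvec R u) = 0) ->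
  probability_on nu ->
  (exists B : R, forall k y, `|f k y| <= B) ->
  (exists L : R, forall k y z, `|f k y - f k z| <= L * `|y - z|) ->
  0 <= T ->
  let fbar := fun y => \sum_(i : E) f i y * mu i in
  forall eps : R, 0 < eps ->
  (fun m : nat =>
     @prob_event R E d P p nu m (Num.truncn ((m%:R) ^+ 2 * T))
       (fun w => exists t : R, 0 <= t <= T /\
          eps < ((m%:R) ^+ 2)^-1 *
            `| \sum_(k < Num.truncn ((m%:R) ^+ 2 * t))
                   f (pxi w k) ((m%:R)^-1 *: pS R w k)
               - \sum_(k < Num.truncn ((m%:R) ^+ 2 * t))
                   fbar ((m%:R)^-1 *: pS R w k) |))
  @ \oo --> (0 : R).
Proof.
move=> d0 sP irr aper mup inv pprob pC2 cent nup [B hB] [L hL] T0 fbar eps eps0.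
have [P0 P1] := sP; have [mu0 mu1] := mup; have [nu0 nu1] := nup.
have pp0 : forall k y u, 0 <= p k y u by move=> k y u; exact: (pprob k y).1.
have pp1 : forall k y, \sum_u p k y u = 1 by move=> k y; exact: (pprob k y).2.
pose g := fun i y => f i y - fbar y.
have gmu : forall y, \sum_i mu i * g i y = 0.
  move=> y; rewrite /g; under eq_bigr do rewrite mulrBr.
  rewrite sumrB -mulr_suml mu1 mul1r; apply/eqP; rewrite subr_eq0; apply/eqP.
  by rewrite /fbar; apply: eq_bigr => i _; rewrite mulrC.
have [Q hQ] := poisson sP irr mup inv.
pose h := fun i y => \sum_j g j y * Q j i.
pose SQ := \sum_i \sum_j `|Q j i|.
have SQi : forall i, \sum_j `|Q j i| <= SQ.
  by move=> i; apply: (sum_term_le (F := fun i => \sum_j `|Q j i|)) => k; apply: sumr_ge0.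
have SQ0 : 0 <= SQ by apply: sumr_ge0 => i _; apply: sumr_ge0.
have fbB : forall y, `|fbar y| <= `|B|.
  move=> y; apply: le_trans (ler_norm_sum _ _ _) _.
  apply: (@le_trans _ _ (\sum_i `|B| * mu i)); last by rewrite -mulr_sumr mu1 mulr1.
  apply: ler_sum => i _; rewrite normrM (ger0_norm (mu0 i)); apply: ler_wpM2r => //.
  exact: le_trans (hB i y) (ler_norm B).
have gB : forall j y, `|g j y| <= 2 * `|B|.
  move=> j y; have -> : 2 * `|B| = `|B| + `|B| by ring.
  apply: le_trans (ler_normB _ _) _; apply: lerD => //.
  exact: le_trans (hB j y) (ler_norm B).
have gL : forall j y z, `|g j y - g j z| <= 2 * `|L| * `|y - z|.
  move=> j y z.
  have -> : g j y - g j z = (f j y - f j z) - (fbar y - fbar z) by rewrite /g; ring.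
  have hL' : forall k, `|f k y - f k z| <= `|L| * `|y - z|.
    move=> k; apply: le_trans (hL k y z) _; apply: ler_wpM2r => //; exact: ler_norm.
  have -> : 2 * `|L| * `|y - z| = `|L| * `|y - z| + `|L| * `|y - z| by ring.
  apply: le_trans (ler_normB _ _) _; apply: lerD => //.
  have -> : fbar y - fbar z = \sum_i (f i y - f i z) * mu i.
    by rewrite /fbar -sumrB; apply: eq_bigr => i _; rewrite mulrBl.
  apply: le_trans (ler_norm_sum _ _ _) _.
  apply: (@le_trans _ _ (\sum_i `|L| * `|y - z| * mu i)); last by rewrite -mulr_sumr mu1 mulr1.
  apply: ler_sum => i _; rewrite normrM (ger0_norm (mu0 i)); exact: ler_wpM2r.
have hH : forall i y, `|h i y| <= 2 * `|B| * SQ.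
  move=> i y; apply: le_trans (ler_norm_sum _ _ _) _.
  apply: (@le_trans _ _ (\sum_j 2 * `|B| * `|Q j i|)).
    by apply: ler_sum => j _; rewrite normrM; apply: ler_wpM2r.
  by rewrite -mulr_sumr; apply: ler_wpM2l => //; rewrite mulr_ge0.
have hLh : forall i y z, `|h i y - h i z| <= (2 * `|L| * SQ) * `|y - z|.
  move=> i y z; rewrite /h -sumrB.
  under eq_bigr do rewrite -mulrBl.
  apply: le_trans (ler_norm_sum _ _ _) _.
  apply: (@le_trans _ _ (\sum_j 2 * `|L| * `|y - z| * `|Q j i|)).
    by apply: ler_sum => j _; rewrite normrM; apply: ler_wpM2r.
  rewrite -mulr_sumr mulrAC; apply: ler_wpM2r => //.
  by apply: ler_wpM2l => //; rewrite mulr_ge0.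
have hfg : forall i y, f i y - fbar y = h i y - \sum_k P i k * h k y.
  by move=> i y; rewrite (hQ (fun j => g j y) (gmu y) i).
have Hh0 : 0 <= 2 * `|B| * SQ by rewrite !mulr_ge0.
have Lh0 : 0 <= 2 * `|L| * SQ by rewrite !mulr_ge0.
set Hh := 2 * `|B| * SQ in hH Hh0.
set Lh := 2 * `|L| * SQ in hLh Lh0.
pose K1' := K1 d Hh Lh T.
apply: (@cvg0_bound _ _ (K2 d nu Hh T eps) (Num.truncn (2 * K1' / eps)).+1).
  move=> m; rewrite /prob_event; apply: sumr_ge0 => w _.
  exact: (path_prob_ge0 m sP pp0 nu0).
move=> m hm m1.
apply: (prob_bound sP pp0 pp1 nu0 hH hLh Hh0 Lh0 T0 eps0 hfg m1).
- apply: le_trans (ltW (truncnS_gt _)) _; by rewrite ler_nat.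
- by rewrite truncn_le mulr_ge0 ?exprn_ge0.
- move=> w [t [/andP[t0 tT] ht]].
  exists (Num.truncn ((m%:R) ^+ 2 * t)).
    by apply: le_truncn; apply: ler_wpM2l => //; rewrite exprn_ge0.
  have m20 : 0 < (m%:R : R) ^+ 2 by rewrite exprn_gt0 // ltr0n.
  move: ht; rewrite ltr_pdivlMl // mulrC.
  by move=> H; rewrite sumrB !big_mkord; exact: H.
Qed.
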